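(* Let $A$ be a complex vector space of dimension $n\ge2$, let $h$ be a symmetric bilinear form on $A$, let $c\in A$ with $h(c,c)=0$ and $h(\cdot,c)\neq0$, and define $x*y=-h(y,c)x+h(x,y)c$. Then $(A,* )$ is isomorphic to $A^{(k)}_{(5)}$ for some $k\in\{0,\dots,n-2\}$, where $A^{(k)}_{(5)}$ has basis $e_1,\dots,e_n$ and nonzero products of basis vectors $e_2e_1=-e_1$, $e_2e_2=e_2$, $e_je_2=e_j$ ($3\le j\le n$), $e_le_l=e_1$ ($3\le l\le k+2$). *)

(* Defs.v *)
From mathcomp Require Import all_boot all_algebra.
From mathcomp Require Import complex.
From mathcomp Require Import Rstruct.

Set Implicit Arguments.
Unset Strict Implicit.
Unset Printing Implicit Defensive.

Import GRing.Theory.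
Local Open Scope ring_scope.

Definition Cplx : numClosedFieldType := Rdefinitions.R[i].

Definition sym_bilinear_form (V : vectType Cplx) (h : V -> V -> Cplx) : Prop :=
  (forall (a : Cplx) (x y z : V), h (a *: x + y) z = a * h x z + h y z) /\
  (forall (a : Cplx) (x y z : V), h z (a *: x + y) = a * h z x + h z y) /\
  (forall x y : V, h x y = h y x).

Definition hc_mul (V : vectType Cplx) (h : V -> V -> Cplx) (c : V) (x y : V) : V :=
  - (h y c) *: x + (h x y) *: c.

(* Structure constants of A^(k)_(5) on basis e_1..e_n, indexed 0-based:
   e_(i+1) e_(j+1) = \sum_l gamma5 k i j l e_(l+1). *)
Definition gamma5 (k i j l : nat) : Cplx :=
  if [&& i == 1%N, j == 0%N & l == 0%N] then -1
  else if [&& i == 1%N, j == 1%N & l == 1%N] then 1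
  else if [&& (2 <= i)%N, j == 1%N & l == i] then 1
  else if [&& (2 <= i)%N, i == j, (i <= k.+1)%N & l == 0%N] then 1
  else 0.

(* Multiplication of A^(k)_(5), realized on coordinate row vectors 'rV_n
   (coordinates w.r.t. the basis e_1..e_n), extended bilinearly. *)
Definition mulA5 (n k : nat) (x y : 'rV[Cplx]_n) : 'rV[Cplx]_n :=
  \row_(l < n) \sum_(i < n) \sum_(j < n) x 0 i * y 0 j * gamma5 k i j l.

Definition alg_iso (V W : vectType Cplx) (mulV : V -> V -> V) (mulW : W -> W -> W)
  (f : V -> W) : Prop :=
  (forall (a : Cplx) (x y : V), f (a *: x + y) = a *: f x + f y) /\
  bijective f /\
  (forall x y : V, f (mulV x y) = mulW (f x) (f y)).

(* Main.v *)
Require Import Defs.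
From HB Require Import structures.
From mathcomp Require Import all_boot all_algebra.
From mathcomp Require Import complex.
From mathcomp Require Import Rstruct.
From mathcomp Require Import ring zify.
From Stdlib Require Import Classical.
Import GRing.Theory Num.Theory.
Local Open Scope ring_scope.
Set Implicit Arguments.
Unset Strict Implicit.

Lemma dim_cap_ker (V : vectType Cplx) (f : {linear V -> Cplx^o}) (U : {vspace V}) y :
  y \in U -> f y != 0 -> \dim (U :&: lker (linfun f)) = (\dim U).-1.
Proof.
move=> yU fy0.
have := limg_ker_dim (linfun f) U.
have d1 : \dim (linfun f @: U) = 1%N.
  apply/eqP; rewrite eqn_leq; apply/andP; split.
    by rewrite (leq_trans (dimvS (subvf _))) // dimvf /dim /=.
  rewrite lt0n dimv_eq0; apply/negP => /eqP H.
  have : linfun f y \in (linfun f @: U)%VS by apply: memv_img.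
  by rewrite H memv0 lfunE (negPf fy0).
by rewrite d1 addn1 => <-.
Qed.

Definition hform (V : vectType Cplx) (h : V -> V -> Cplx) (u : V) : V -> Cplx^o := fun y => h y u.

Lemma hform_lin (V : vectType Cplx) (h : V -> V -> Cplx) (hb : sym_bilinear_form h) (u : V) :
  linear_for *:%R (hform h u).
Proof. by case: hb => h1 _ a x y; rewrite /hform h1. Qed.

Definition hlin (V : vectType Cplx) (h : V -> V -> Cplx) (hb : sym_bilinear_form h) (u : V) : {linear V -> Cplx^o} :=
  HB.pack (hform h u) (GRing.isLinear.Build _ _ _ _ (hform h u) (hform_lin hb u)).

Lemma hlinE (V : vectType Cplx) (h : V -> V -> Cplx) (hb : sym_bilinear_form h) (u y : V) :
  linfun (hlin hb u) y = h y u.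
Proof. by rewrite lfunE. Qed.

Section H.
Context (V : vectType Cplx) (h : V -> V -> Cplx) (hb : sym_bilinear_form h).

Lemma hlinV u y : (hlin hb u : V -> Cplx^o) y = h y u. Proof. by []. Qed.
Lemma hsym x y : h x y = h y x. Proof. by case: hb => _ [_ ->]. Qed.
Lemma hZl a x z : h (a *: x) z = a * h x z. Proof. by rewrite -!hlinV linearZ. Qed.
Lemma hDl x y z : h (x + y) z = h x z + h y z. Proof. by rewrite -!hlinV linearD. Qed.
Lemma hNl x z : h (- x) z = - h x z. Proof. by rewrite -!hlinV linearN. Qed.
Lemma h0l z : h 0 z = 0. Proof. by rewrite -!hlinV linear0. Qed.
Lemma hZr a x z : h z (a *: x) = a * h z x. Proof. by rewrite hsym hZl hsym. Qed.
Lemma hDr x y z : h z (x + y) = h z x + h z y. Proof. by rewrite hsym hDl !(hsym z). Qed.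
Lemma hNr x z : h z (- x) = - h z x. Proof. by rewrite hsym hNl hsym. Qed.
Lemma h0r z : h z 0 = 0. Proof. by rewrite hsym h0l. Qed.

Lemma polar (U : {vspace V}) : (forall x, x \in U -> h x x = 0) ->
  forall x y, x \in U -> y \in U -> h x y = 0.
Proof.
move=> H0 x y xU yU.
have := H0 _ (memvD xU yU); rewrite hDl !hDr H0 // H0 // add0r addr0 (hsym y x).
move/eqP; rewrite -mulr2n -mulr_natr mulf_eq0 pnatr_eq0 orbF.
by move/eqP.
Qed.

Lemma diag m : forall (U : {vspace V}), \dim U = m ->
  exists t : seq V, exists k, [/\ size t = m, (k <= m)%N, basis_of U t &
    forall i j, (i < m)%N -> (j < m)%N -> h t`_i t`_j = ((i == j) && (i < k)%N)%:R].
Proof.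
elim: m => [|m IH] U dU.
  exists [::], 0%N; split => //; by rewrite basisEfree nil_free span_nil sub0v dU.
have [[x [xU hx]] | nex] := classic (exists x, x \in U /\ h x x != 0); last first.
  have H0 : forall x, x \in U -> h x x = 0.
    move=> x xU; apply/eqP; apply/negPn/negP => hx; apply: nex; by exists x.
  exists (vbasis U), 0%N; split => //.
  - by rewrite size_tuple dU.
  - exact: vbasisP.
  move=> i j im jm; rewrite andbF; apply: (polar H0); apply: vbasis_mem; apply: mem_nth;
    by rewrite size_tuple dU.
pose s := sqrtC (h x x).
have s0 : s != 0 by rewrite sqrtC_eq0.
pose u := s^-1 *: x.
have huu : h u u = 1.
  by rewrite /u hZl hZr mulrA -expr2 exprVn sqrtCK mulVf.
have uU : u \in U by rewrite memvZ.
pose U' := (U :&: lker (linfun (hlin hb u)))%VS.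
have dU' : \dim U' = m.
  rewrite /U' (dim_cap_ker (y := u)) // ?dU //; change (h u u != 0); by rewrite huu oner_neq0.
have U'o : forall y, y \in U' -> h y u = 0.
  by move=> y /memv_capP[_]; rewrite memv_ker hlinE => /eqP.
have [t [k [st km bt ht]]] := IH U' dU'.
exists (u :: t), k.+1; split => //=.
- by rewrite st.
- rewrite basisEfree free_cons (span_basis bt) (basis_free bt) andbT /= st dU leqnn andbT.
  apply/andP; split.
    by apply/negP => /U'o /eqP; rewrite huu oner_eq0.
  rewrite span_cons subv_add (span_basis bt) capvSl andbT.
  by rewrite -memvE.
move=> [|i] [|j] //= im jm.
- rewrite hsym; apply: U'o; rewrite -(span_basis bt); apply: memv_span; apply: mem_nth; by rewrite st.
- apply: U'o; rewrite -(span_basis bt); apply: memv_span; apply: mem_nth; by rewrite st.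
by rewrite ht.
Qed.

End H.

Lemma iso_of_basis (V : vectType Cplx) n k (b : n.-tuple V) (mul : V -> V -> V) :
 basis_of fullv b ->
 (forall a x1 x2 y, mul (a *: x1 + x2) y = a *: mul x1 y + mul x2 y) ->
 (forall a y1 y2 x, mul x (a *: y1 + y2) = a *: mul x y1 + mul x y2) ->
 (forall i j l : 'I_n, coord b l (mul b`_i b`_j) = gamma5 k i j l) ->
 alg_iso mul (@mulA5 n k) (fun v => \row_l coord b l v).
Proof.
move=> bb mDl mDr mg.
have fb := basis_free bb.
have spb v : v = \sum_i coord b i v *: b`_i.
  by apply: coord_span; rewrite (span_basis bb) memvf.
have m0l y : mul 0 y = 0.
  by have := mDl (-1) 0 0 y; rewrite scaler0 addr0 scaleN1r addNr.
have m0r x : mul x 0 = 0.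
  by have := mDr (-1) 0 0 x; rewrite scaler0 addr0 scaleN1r addNr.
have mSl y (F : 'I_n -> V) : mul (\sum_i F i) y = \sum_i mul (F i) y.
  elim/big_rec2: _ => [|i x1 x2 _ <-]; first exact: m0l.
  by have := mDl 1 (F i) x2 y; rewrite !scale1r.
have mSr x (F : 'I_n -> V) : mul x (\sum_i F i) = \sum_i mul x (F i).
  elim/big_rec2: _ => [|i x1 x2 _ <-]; first exact: m0r.
  by have := mDr 1 (F i) x2 x; rewrite !scale1r.
have mZl a x y : mul (a *: x) y = a *: mul x y by rewrite -[_ *: x]addr0 mDl m0l addr0.
have mZr a x y : mul x (a *: y) = a *: mul x y by rewrite -[_ *: y]addr0 mDr m0r addr0.
split; [|split].
- by move=> a x y; apply/rowP => l; rewrite !mxE linearP.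
- exists (fun r : 'rV_n => \sum_i r 0 i *: b`_i) => [v|r].
    by rewrite [RHS]spb; apply: eq_bigr => i _; rewrite mxE.
  by apply/rowP => l; rewrite mxE coord_sum_free.
move=> x y; apply/rowP => l; rewrite !mxE.
rewrite {1}(spb x) {1}(spb y) mSl linear_sum; apply: eq_bigr => i _.
rewrite mZl mSr linearZ linear_sum /= big_distrr; apply: eq_bigr => j _.
by rewrite !mxE mZr linearZ /= mg mulrA.
Qed.

Unset Implicit Arguments.
Set Strict Implicit.

Theorem proposition3p8 (n : nat) (V : vectType Cplx) (h : V -> V -> Cplx) (c : V) :
  (2 <= n)%N ->
  \dim (fullv : {vspace V}) = n ->
  sym_bilinear_form h ->
  h c c = 0 ->
  (exists x : V, h x c != 0) ->
  exists k : nat, (k <= n - 2)%N /\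
    exists f : V -> 'rV[Cplx]_n, alg_iso (hc_mul h c) (@mulA5 n k) f.
Proof.
move=> n2 dimV hb hcc [x0 hx0].
have [e hec] : exists e, h e c = -1.
  by exists ((- (h x0 c)^-1) *: x0); rewrite hZl // mulNr mulVf.
have [e2 [he2c he2e2]] : exists e2, h e2 c = -1 /\ h e2 e2 = 0.
  exists (e + (h e e / 2) *: c); split.
    by rewrite hDl // hZl // hcc mulr0 addr0.
  rewrite hDl // !hDr // !hZl // !hZr // hcc (hsym hb c e) hec.
  have two : (2 : Cplx) != 0 by rewrite pnatr_eq0.
  by field.
have hce2 : h c e2 = -1 by rewrite hsym.
pose W1 := (fullv :&: lker (linfun (hlin hb c)))%VS.
have dW1 : \dim W1 = n.-1.
  rewrite /W1 (dim_cap_ker (y := e2)) ?dimV ?memvf //.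
  by change (h e2 c != 0); rewrite he2c oppr_eq0 oner_eq0.
have cW1 : c \in W1 by rewrite memv_cap memvf memv_ker hlinE hcc eqxx.
pose W := (W1 :&: lker (linfun (hlin hb e2)))%VS.
have dW : \dim W = n.-1.-1.
  rewrite /W (dim_cap_ker (y := c)) ?dW1 //.
  by change (h c e2 != 0); rewrite hce2 oppr_eq0 oner_eq0.
have Wo w : w \in W -> h w c = 0 /\ h w e2 = 0.
  case/memv_capP => /memv_capP[_ w1 w2].
  rewrite memv_ker hlinE in w1.
  rewrite memv_ker hlinE in w2.
  by split; apply/eqP.
have [t [k [st km bt ht]]] := diag hb dW.
exists k; split; first by by rewrite subn2.
have tW i : (i < n.-2)%N -> t`_i \in W.
  move=> im; rewrite -(span_basis bt); apply: memv_span; apply: mem_nth; by rewrite st.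
pose bs := [:: c, e2 & t].
have sb : size bs == n by rewrite /= st; apply/eqP; lia.
pose b : n.-tuple V := Tuple sb.
have fb : free bs.
  rewrite /bs free_cons free_cons (basis_free bt) andbT span_cons (span_basis bt).
  apply/andP; split.
    apply/negP => /memv_addP [y /vlineP [a ->] [w wW ceq]].
    have := hce2; rewrite ceq hDl // hZl // he2e2 (Wo w wW).2 mulr0 addr0 => /eqP.
    by rewrite eq_sym oppr_eq0 oner_eq0.
  apply/negP => /Wo [] ; rewrite he2c => /eqP; by rewrite oppr_eq0 oner_eq0.
have bb : basis_of fullv b by rewrite basisEfree fb subvf dimV /= st; apply/leP; lia.
exists (fun v => \row_l coord b l v); apply: iso_of_basis => //.
- move=> a x1 x2 y; rewrite /hc_mul hDl // hZl //.
  by rewrite scalerDr scalerDl !scalerDr !scalerA [a * - _]mulrC addrACA.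
- move=> a y1 y2 x; rewrite /hc_mul hDl // hZl // hDr // hZr //.
  by rewrite opprD -mulrN !scalerDl !scalerDr !scalerA addrACA.
have cb (m l : 'I_n) : coord b l (b`_m) = (m == l)%:R by apply: coord_free.
have cc (l : 'I_n) : coord b l c = (0 == l :> nat)%:R.
  by have := cb (Ordinal (leq_trans (isT : 0 < 2)%N n2)) l.
have ce (l : 'I_n) : coord b l e2 = (1 == l :> nat)%:R.
  by have := cb (Ordinal n2) l.
have ct (l : 'I_n) i : (i.+2 < n)%N -> coord b l t`_i = (i.+2 == l :> nat)%:R.
  by move=> Hi; have := cb (Ordinal Hi) l.
have coordN (l : 'I_n) v : coord b l (- v) = - coord b l v by rewrite linearN.
have coordZ (l : 'I_n) a v : coord b l (a *: v) = a * coord b l v by rewrite linearZ.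
move=> [i Hi] [j Hj] [l Hl] /=.
case: i Hi => [|[|i]] Hi.
- by rewrite /hc_mul /= hsym // scaleNr addNr linear0 /gamma5.
- case: j Hj => [|[|j]] Hj /=.
  + rewrite /hc_mul hcc he2c oppr0 scale0r add0r scaleN1r coordN cc /gamma5 /=.
    by case: l Hl => [|l] Hl //=; rewrite ?mulr0n ?mulr1n ?oppr0.
  + rewrite /hc_mul he2c he2e2 scale0r addr0 opprK scale1r ce /gamma5 /=.
    by case: l Hl => [|[|l]] Hl //=.
  + have Hj' : (j < n.-2)%N by lia.
    have [w1 w2] := Wo _ (tW j Hj').
    by rewrite /hc_mul w1 hsym // w2 oppr0 !scale0r addr0 linear0 /gamma5 /=.
- have Hi' : (i < n.-2)%N by lia.
  have [w1 w2] := Wo _ (tW i Hi').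
  case: j Hj => [|[|j]] Hj /=.
  + by rewrite /hc_mul hcc w1 oppr0 !scale0r addr0 linear0 /gamma5 /=.
  + rewrite /hc_mul he2c w2 opprK scale0r addr0 scale1r ct // /gamma5 /=.
    by rewrite eq_sym; case: (_ == _).
  + have Hj' : (j < n.-2)%N by lia.
    have [w3 w4] := Wo _ (tW j Hj').
    rewrite /hc_mul w3 oppr0 scale0r add0r ht // coordZ cc /gamma5 /=.
    case: l Hl => [|l] Hl /=; rewrite ?andbT ?andbF ?mulr0n ?mulr0 //.
    by case: (_ && _); rewrite ?mulr1.
Qed.
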